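(* Let $G,G'$ be locally compact Hausdorff groupoids, $G$ metrizable with metric $d_{G}$ for which inversion is an isometry and $r,s$ are contractions, and let $\pi:G\to G'$ be a continuous, proper groupoid morphism such that for every unit $u\in G^0$, $\pi|_{G^{u}}:G^{u}\to (G')^{\pi(u)}$ is a homeomorphism. Suppose a sequence $x_{k}'$ converges to $x'$ in $G'$. Then $\lim_{k}\mathrm{diam}_{G}(\pi^{-1}\{x_{k}'\})=0$ if and only if $\lim_{k}\mathrm{diam}_{G}(\pi^{-1}\{r(x_{k}')\})=0$.
   Context: $G^{u}=r^{-1}\{u\}$. For a compact $E\subseteq G$, $\mathrm{diam}_{G}(E)=\sup\{d_G(x,y):x,y\in E\}$. *)

(* Defs.v *)
From HB Require Import structures.
From mathcomp Require Import all_boot all_order all_algebra.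
From mathcomp Require Import all_classical all_reals topology normedtype.
Set Implicit Arguments. Unset Strict Implicit. Unset Printing Implicit Defensive.
Import Order.TTheory GRing.Theory Num.Theory.
Import numFieldNormedType.Exports.
Local Open Scope classical_set_scope.
Local Open Scope ring_scope.

(* Groupoid data on a carrier T: unit space G^0, range r, source s,
   (total function for the partial) multiplication mul, inverse inv. *)
Record groupoid_data (T : Type) := GroupoidData {
  gunits : set T;
  gr : T -> T;
  gs : T -> T;
  gmul : T -> T -> T;
  ginv : T -> T }.

(* Groupoid axioms; the product x*y is defined iff gs x = gr y. *)
Definition is_groupoid (T : Type) (G : groupoid_data T) : Prop :=
  [/\ (forall x, gunits G (gr G x) /\ gunits G (gs G x)) /\
        (forall u, gunits G u -> gr G u = u /\ gs G u = u),
      (forall x y, gs G x = gr G y ->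
          gr G (gmul G x y) = gr G x /\ gs G (gmul G x y) = gs G y),
      (forall x y z, gs G x = gr G y -> gs G y = gr G z ->
          gmul G (gmul G x y) z = gmul G x (gmul G y z)),
      (forall x, gmul G (gr G x) x = x /\ gmul G x (gs G x) = x) &
      (forall x, [/\ gr G (ginv G x) = gs G x, gs G (ginv G x) = gr G x,
                     gmul G x (ginv G x) = gr G x &
                     gmul G (ginv G x) x = gs G x])].

Definition is_lch_groupoid (T : topologicalType) (G : groupoid_data T) : Prop :=
  [/\ is_groupoid G,
      hausdorff_space T,
      (forall x : T, exists K : set T, compact K /\ nbhs x K),
      {within [set p : T * T | gs G p.1 = gr G p.2],
         continuous (fun p : T * T => gmul G p.1 p.2)} &
      continuous (ginv G)].

Definition range_fiber (T : Type) (G : groupoid_data T) (u : T) : set T :=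
  [set x | gr G x = u].

Definition compatible_metric (R : realType) (T : topologicalType)
    (d : T -> T -> R) : Prop :=
  [/\ (forall x y, 0 <= d x y),
      (forall x y, d x y = 0 <-> x = y),
      (forall x y, d x y = d y x),
      (forall x y z, d x z <= d x y + d y z) &
      (forall (x : T) (A : set T),
          nbhs x A <-> exists2 e : R, 0 < e & [set y | d x y < e] `<=` A)].

(* diam_G(E) = sup { d(x,y) : x, y in E }  (mathcomp's sup; 0 for E empty) *)
Definition diam (R : realType) (T : Type) (d : T -> T -> R) (E : set T) : R :=
  sup [set d x y | x in E & y in E].

Definition groupoid_morphism (T T' : Type) (G : groupoid_data T)
    (G' : groupoid_data T') (pi : T -> T') : Prop :=
  forall x y, gs G x = gr G y ->
    gs G' (pi x) = gr G' (pi y) /\ pi (gmul G x y) = gmul G' (pi x) (pi y).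

Definition proper_map (T T' : topologicalType) (pi : T -> T') : Prop :=
  forall K : set T', compact K -> compact (pi @^-1` K).

Definition fiber_homeomorphism (T T' : topologicalType) (G : groupoid_data T)
    (G' : groupoid_data T') (pi : T -> T') (u : T) : Prop :=
  [/\ (forall x, range_fiber G u x -> range_fiber G' (pi u) (pi x)),
      {within range_fiber G u, continuous pi} &
      exists g : T' -> T,
        [/\ (forall y, range_fiber G' (pi u) y ->
                range_fiber G u (g y) /\ pi (g y) = y),
            (forall x, range_fiber G u x -> g (pi x) = x) &
            {within range_fiber G' (pi u), continuous g}]].

(* Main.v *)
Require Import Defs.
From HB Require Import structures.
From mathcomp Require Import all_boot all_order all_algebra.
From mathcomp Require Import all_classical all_reals topology normedtype.
From mathcomp Require Import lra.
Import Order.TTheory GRing.Theory Num.Theory.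
Import numFieldNormedType.Exports.
Local Open Scope classical_set_scope.
Local Open Scope ring_scope.

Lemma diam_ge0 (R : realType) (T : Type) (d : T -> T -> R) (A : set T) :
  (forall x y, 0 <= d x y) -> 0 <= diam d A.
Proof.
move=> d0; rewrite /diam.
have [hs|hs] := pselect (has_sup [set d x y | x in A & y in A]); last by rewrite sup_out.
case: (hs) => -[e He] _; apply: le_trans (ub_le_sup _ He); last by case: hs.
by case: He => x _ [y _ <-].
Qed.

Lemma diam_ub (R : realType) (T : Type) (d : T -> T -> R) (A : set T) x y :
  has_ubound [set d x y | x in A & y in A] -> A x -> A y -> d x y <= diam d A.
Proof. by move=> hb Ax Ay; apply: ub_le_sup => //; exists x => //; exists y. Qed.

Lemma diam_le (R : realType) (T : Type) (d : T -> T -> R) (A : set T) c :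
  0 <= c -> (forall x y, A x -> A y -> d x y <= c) -> diam d A <= c.
Proof.
move=> c0 H; rewrite /diam.
have [ne|ne] := pselect ([set d x y | x in A & y in A] !=set0).
  by apply: ge_sup => // e [x Ax [y Ay <-]]; exact: H.
by rewrite sup_out // => -[].
Qed.

Lemma ball_nbhs (R : realType) (T : topologicalType) (d : T -> T -> R) x e :
  compatible_metric d -> 0 < e -> nbhs x [set y | d x y < e].
Proof. by case=> _ _ _ _ H e0; apply/H; exists e. Qed.

Lemma nbhs_ball (R : realType) (T : topologicalType) (d : T -> T -> R) x A :
  compatible_metric d -> nbhs x A -> exists2 e, 0 < e & [set y | d x y < e] `<=` A.
Proof. by case=> _ _ _ _ H /H. Qed.

Lemma cpt_bnd (R : realType) (T : topologicalType) (d : T -> T -> R) (A : set T) :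
  compatible_metric d -> compact A -> has_ubound [set d x y | x in A & y in A].
Proof.
move=> dm cA; have [d0 dE dC dtri dN] := dm.
have [[x0 Ax0]|A0] := pselect (A !=set0); last first.
  by exists 0 => z [x Ax]; exfalso; apply: A0; exists x.
suff [M HM] : exists M, forall y, A y -> d x0 y <= M.
  exists (M + M) => _ [x Ax [y Ay <-]].
  apply: le_trans (dtri x x0 y) _; rewrite dC; apply: lerD; exact: HM.
apply/not_existsP => H.
have /choice [f Hf] : forall n : nat, exists y, A y /\ n%:R < d x0 y.
  move=> n; have /existsNP [y] := H n%:R.
  by move=> /not_implyP [Ay /negP]; rewrite -ltNge => ?; exists y.
have FA : (f @ \oo) A by apply: (@filterE nat \oo _) => n; case: (Hf n).
have [p [Ap clp]] := cA _ _ FA.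
set N := (Num.truncn (d x0 p + 1)).+1.
have hN : d x0 p + 1 < N%:R by exact: truncnS_gt.
have FS : (f @ \oo) (f @` [set n | (N <= n)%N]).
  by apply: filterS (nbhs_infty_ge N) => n Nn; exists n.
have [_ [[n /= Nn <-] dp]] := clp _ _ FS (@ball_nbhs _ _ d p 1 dm ltr01).
have := Hf n => -[_]; apply/negP; rewrite -leNgt.
apply: le_trans (dtri x0 p (f n)) _.
apply: le_trans (_ : d x0 p + 1 <= _); first by rewrite lerD2l ltW.
by apply: le_trans (ltW hN) _; rewrite ler_nat.
Qed.

Lemma pi_r (T T' : Type) (G : groupoid_data T) (G' : groupoid_data T') pi :
  is_groupoid G -> is_groupoid G' -> groupoid_morphism G G' pi ->
  forall y, pi (gr G y) = gr G' (pi y).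
Proof.
move=> [[hu hu'] hm ha hid hinv] [[ku ku'] km ka kid kinv] hpi y.
have [ru su] := hu' _ (hu y).1.
have [h1 h2] := hpi (gr G y) y su.
rewrite (hid y).1 in h2.
set a := pi (gr G y) in h1 h2 *; set b := pi y in h1 h2 *.
have [i1 i2 i3 i4] := kinv b.
rewrite -(kid a).2 h1 -i3 -ka //; first by rewrite -h2.
Qed.

Lemma fiber_unit (T T' : topologicalType) (G : groupoid_data T) (G' : groupoid_data T') pi x' z :
  is_groupoid G -> is_groupoid G' -> groupoid_morphism G G' pi ->
  (forall u, gunits G u -> fiber_homeomorphism G G' pi u) ->
  pi z = gr G' x' -> gr G z = z.
Proof.
move=> gG gG' hpi fh hz.
have gG0 := gG; have gG'0 := gG'.
case: gG0 => [[hu hu'] _ _ _ _]; case: gG'0 => [[ku ku'] _ _ _ _].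
have uz := (hu z).1.
have [_ _ [g [_ gK _]]] := fh _ uz.
have e1 : pi (gr G z) = pi z.
  by rewrite (@pi_r _ _ G G' pi gG gG' hpi) hz (ku' _ (ku x').1).1.
have e2 : range_fiber G (gr G z) (gr G z) by exact: (hu' _ uz).1.
by rewrite -{2}(gK z erefl) -e1 gK.
Qed.

Lemma fiber_lift (T T' : topologicalType) (G : groupoid_data T) (G' : groupoid_data T') pi x' u :
  (forall u, gunits G u -> fiber_homeomorphism G G' pi u) ->
  gunits G u -> pi u = gr G' x' -> exists y, gr G y = u /\ pi y = x'.
Proof.
move=> fh uu hu.
have [_ _ [g [gP _ _]]] := fh _ uu.
have [h1 h2] := gP x' (esym hu).
by exists (g x').
Qed.

Lemma fiber_inj (T T' : topologicalType) (G : groupoid_data T) (G' : groupoid_data T') pi y z :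
  is_groupoid G ->
  (forall u, gunits G u -> fiber_homeomorphism G G' pi u) ->
  gr G y = gr G z -> pi y = pi z -> y = z.
Proof.
move=> [[hu _] _ _ _ _] fh hr hp.
have [_ _ [g [_ gK _]]] := fh _ (hu y).1.
by rewrite -(gK y erefl) hp gK.
Qed.

Lemma claim (R : realType) (T T' : topologicalType)
    (G : groupoid_data T) (G' : groupoid_data T') (d : T -> T -> R)
    (pi : T -> T') (K' : set T') (e : R) :
  is_groupoid G -> hausdorff_space T' -> compatible_metric d ->
  (forall x y, d (gr G x) (gr G y) <= d x y) ->
  continuous pi -> proper_map pi ->
  (forall u, gunits G u -> fiber_homeomorphism G G' pi u) ->
  compact K' -> 0 < e ->
  exists2 del, 0 < del & forall y z, pi y = pi z -> K' (pi y) ->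
     d (gr G y) (gr G z) < del -> d y z < e.
Proof.
move=> gG hT' dm dr cpi ppi fh cK e0.
have [d0 dE dC dtri dN] := dm.
apply: contrapT => Hn.
have /choice [f Hf] : forall n : nat, exists p : T * T,
   [/\ pi p.1 = pi p.2, K' (pi p.1), d (gr G p.1) (gr G p.2) < n.+1%:R^-1
     & e <= d p.1 p.2].
  move=> n; apply: contrapT => Hn2; apply: Hn; exists n.+1%:R^-1.
    by rewrite invr_gt0 ltr0Sn.
  move=> y z h1 h2 h3; rewrite ltNge; apply/negP => h4; apply: Hn2.
  by exists (y, z).
have cK2 : compact (pi @^-1` K' `*` pi @^-1` K').
  by apply: compact_setX; apply: ppi.
have FA : (f @ \oo) (pi @^-1` K' `*` pi @^-1` K').
  apply: (@filterE nat \oo _) => n; case: (Hf n) => h1 h2 _ _.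
  by split => //=; rewrite /preimage /= -h1.
have [[y z] [_ clp]] := cK2 _ _ FA.
have hn : forall B1 B2 N, nbhs y B1 -> nbhs z B2 ->
    exists n, [/\ (N <= n)%N, B1 (f n).1 & B2 (f n).2].
  move=> B1 B2 N n1 n2.
  have FS : (f @ \oo) (f @` [set n | (N <= n)%N]).
    by apply: filterS (nbhs_infty_ge N) => n Nn; exists n.
  have NB : nbhs (y, z) (B1 `*` B2) by exists (B1, B2).
  have [_ [[n /= Nn <-] [b1 b2]]] := clp _ _ FS NB.
  by exists n.
have hb : forall eta N, 0 < eta ->
    exists n, [/\ (N <= n)%N, d y (f n).1 < eta & d z (f n).2 < eta].
  move=> eta N eta0.
  have [n [h1 h2 h3]] := hn _ _ N (@ball_nbhs _ _ d y eta dm eta0) (@ball_nbhs _ _ d z eta dm eta0).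
  by exists n.
have ryz : gr G y = gr G z.
  apply/dE; apply/eqP; rewrite eq_le d0 andbT; rewrite leNgt; apply/negP => c0.
  have c3 : 0 < d (gr G y) (gr G z) / 3 by rewrite divr_gt0.
  have [N _ HN] := near_infty_natSinv_lt (@interval_inference.PosNum _ _ c3).
  have [n [Nn h1 h2]] := hb _ N c3.
  have h3 := HN n Nn; case: (Hf n) => _ _ h4 _.
  have t1 := dtri (gr G y) (gr G (f n).1) (gr G z).
  have t2 := dtri (gr G (f n).1) (gr G (f n).2) (gr G z).
  have t3 := dr y (f n).1.
  have t4 := dr (f n).2 z.
  have t5 := dC (gr G (f n).2) (gr G z).
  have t6 := dC (f n).2 z.
  simpl in h3. move: h3 h4; set q := (n.+1%:R^-1) => h3 h4.
  clear -t1 t2 t3 t4 t5 t6 h1 h2 h3 h4 c0. lra.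
have pyz : pi y = pi z.
  apply: hT' => A B nA nB.
  have n1 : nbhs y (pi @^-1` A) by apply: cpi.
  have n2 : nbhs z (pi @^-1` B) by apply: cpi.
  have [n [_ h1 h2]] := hn _ _ 0%N n1 n2.
  case: (Hf n) => h _ _ _.
  by exists (pi (f n).1); split => //; rewrite h.
have eyz : e <= d y z.
  rewrite leNgt; apply/negP => c0.
  have c2 : 0 < (e - d y z) / 2 by rewrite divr_gt0 // subr_gt0.
  have [n [_ h1 h2]] := hb _ 0%N c2.
  case: (Hf n) => _ _ _ h4.
  have t1 := dtri (f n).1 y (f n).2.
  have t2 := dtri y z (f n).2.
  have t3 := dC (f n).1 y.
  have t4 := dC z (f n).2.
  clear -t1 t2 t3 t4 h1 h2 h4 c0; lra.
have := @fiber_inj _ _ G G' pi y z gG fh ryz pyz => /dE.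
by move=> h; move: eyz; rewrite h leNgt e0.
Qed.

Theorem lemma7p30 (R : realType) (T T' : topologicalType)
    (G : groupoid_data T) (G' : groupoid_data T') (d : T -> T -> R)
    (pi : T -> T') (xk : nat -> T') (x' : T') :
  is_lch_groupoid G -> is_lch_groupoid G' ->
  compatible_metric d ->
  (forall x y, d (ginv G x) (ginv G y) = d x y) ->
  (forall x y, d (gr G x) (gr G y) <= d x y) ->
  (forall x y, d (gs G x) (gs G y) <= d x y) ->
  continuous pi -> proper_map pi -> groupoid_morphism G G' pi ->
  (forall u, gunits G u -> fiber_homeomorphism G G' pi u) ->
  xk @ \oo --> x' ->
  ((fun k => diam d (pi @^-1` [set xk k])) @ \oo --> (0 : R)) <->
  ((fun k => diam d (pi @^-1` [set gr G' (xk k)])) @ \oo --> (0 : R)).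
Proof.
move=> [gG hT lcT _ _] [gG' hT' lcT' _ _] dm dinv dr ds cpi ppi mpi fh cvx.
have [d0 dE dC dtri dN] := dm.
have bF : forall k, has_ubound [set d x y | x in pi @^-1` [set xk k] & y in pi @^-1` [set xk k]].
  by move=> k; apply: cpt_bnd dm _; apply: ppi; apply: compact_set1.
have bU : forall k, has_ubound [set d x y | x in pi @^-1` [set gr G' (xk k)] & y in pi @^-1` [set gr G' (xk k)]].
  by move=> k; apply: cpt_bnd dm _; apply: ppi; apply: compact_set1.
have hFU : forall k y, pi y = xk k -> pi (gr G y) = gr G' (xk k).
  by move=> k y hy; rewrite (@pi_r _ _ G G' pi gG gG' mpi) hy.
have hUF : forall k u, pi u = gr G' (xk k) -> exists y, gr G y = u /\ pi y = xk k.
  move=> k u hu; apply: (@fiber_lift _ _ G G' pi (xk k) u fh) => //.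
  rewrite -(@fiber_unit _ _ G G' pi (xk k) u gG gG' mpi fh hu).
  by case: gG => [[hu1 _] _ _ _ _]; exact: (hu1 u).1.
split.
  move=> /cvgr0Pnorm_lt H; apply/cvgr0Pnorm_lt => e e0.
  apply: filterS (H e e0) => k.
  rewrite !ger0_norm ?diam_ge0 //; apply: le_lt_trans.
  apply: diam_le; first exact: diam_ge0.
  move=> u v /= Uu Uv.
  have [y [ry py]] := hUF k u Uu; have [z [rz pz]] := hUF k v Uv.
  rewrite -ry -rz; apply: le_trans (dr y z) _.
  by apply: diam_ub.
move=> /cvgr0Pnorm_lt H; apply/cvgr0Pnorm_le => e e0.
have [K' [cK nK]] := lcT' x'.
have [del del0 Hdel] := @claim R T T' G G' d pi K' e gG hT' dm dr cpi ppi fh cK e0.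
have C1 : \forall k \near \oo, K' (xk k) by apply: cvx.
have C2 := H del del0.
near=> k.
have Kk : K' (xk k) by near: k.
have Dk : `|diam d (pi @^-1` [set gr G' (xk k)])| < del by near: k.
rewrite ger0_norm ?diam_ge0 //.
apply: diam_le; first exact: ltW.
move=> y z /= Fy Fz; apply: ltW; apply: Hdel.
- by rewrite Fy Fz.
- by rewrite Fy.
apply: le_lt_trans Dk; rewrite ger0_norm ?diam_ge0 //.
by apply: diam_ub; [exact: bU | exact: hFU | exact: hFU].
Unshelve. all: by end_near.
Qed.
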